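(* Let $T(n)$ denote the number of fixed polyiamonds with $n$ cells. For all positive integers $\ell,m$, $T(\ell+m)\ge \frac{1}{3}\,T(\ell)\,T(m)$.
   Context: The triangular lattice is the tiling of the plane by equilateral triangles; its cells come in two orientations. A polyiamond with $n$ cells is a finite set of $n$ cells of the triangular lattice that is edge-connected, i.e. the graph on the cells in which two cells are adjacent when they share an edge is connected. Two polyiamonds are considered the same if one is a translate of the other (no rotations or reflections allowed); $T(n)$ is the number of such translation classes of polyiamonds with $n$ cells. *)

(* Defs.v *)
From HB Require Import structures.
From mathcomp Require Import all_boot all_order all_algebra.
From mathcomp Require Import finmap.
From mathcomp Require Import boolp classical_sets cardinality.
Set Implicit Arguments. Unset Strict Implicit. Unset Printing Implicit Defensive.
Import GRing.Theory Num.Theory.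

Local Open Scope fset_scope.
Local Open Scope ring_scope.

(* Lattice points are x*a + y*b with
   (a,b) a basis of unit vectors at 60 degrees, x y : int.
   ((x,y), false) = "up"   triangle with vertices (x,y),(x+1,y),(x,y+1);
   ((x,y), true)  = "down" triangle with vertices (x+1,y),(x,y+1),(x+1,y+1).
   Every cell of the lattice is exactly one of these. *)
Definition cell : Type := (int * int * bool)%type.

(* up (x,y) shares one edge with each of down (x,y), down (x-1,y),
   down (x,y-1); these are all edge-adjacencies of the lattice. *)
Definition up_down_adj (u d : int * int) : bool :=
  [|| d == u, d == (u.1 - 1, u.2) | d == (u.1, u.2 - 1)].

Definition adj (c d : cell) : bool :=
  match c.2, d.2 with
  | false, true => up_down_adj c.1 d.1
  | true, false => up_down_adj d.1 c.1
  | _, _ => false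
  end.

Definition edge_connected (P : {fset cell}) : Prop :=
  forall c d, c \in P -> d \in P ->
    exists s : seq cell, [/\ path adj c s, last c s = d & all (fun e => e \in P) s].

Definition polyiamond (n : nat) (P : {fset cell}) : Prop :=
  #|` P| = n /\ edge_connected P.

Definition translate (t : int * int) (P : {fset cell}) : {fset cell} :=
  [fset ((c.1.1 + t.1, c.1.2 + t.2), c.2) | c in P].

Definition tclass (P : {fset cell}) : set {fset cell} :=
  [set Q | exists t, Q = translate t P].

(* T n = number of translation classes of polyiamonds with n cells
   (fset_set of a finite set gives exactly its elements). *)
Definition T (n : nat) : nat :=
  #|` fset_set [set C : set {fset cell} | exists P, polyiamond n P /\ C = tclass P] |.

(* Main.v *)
Require Import Defs.
From HB Require Import structures.
From mathcomp Require Import all_boot all_order all_algebra.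
From mathcomp Require Import finmap.
From mathcomp Require Import boolp classical_sets cardinality.
From mathcomp Require Import zify.
Set Implicit Arguments. Unset Strict Implicit. Unset Printing Implicit Defensive.
Import Order.TTheory GRing.Theory Num.Theory.
Local Open Scope fset_scope.
Local Open Scope ring_scope.

Definition trc (t : int * int) (c : cell) : cell := ((c.1.1 + t.1, c.1.2 + t.2), c.2).
Lemma translateE t P : translate t P = [fset trc t c | c in P].
Proof. by []. Qed.
Definition tau (c : cell) : cell :=
  if c.2 then ((c.1.1 + c.1.2 + 1, - c.1.2 - 1), false)
  else ((c.1.1 + c.1.2, - c.1.2 - 1), true).
Definition refl (P : {fset cell}) : {fset cell} := [fset tau c | c in P].
Definition col (c : cell) : int := 2 * c.1.1 + c.1.2 + (if c.2 then 2 else 1).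
Definition nxt (c : cell) : cell :=
  if c.2 then ((c.1.1 + 1, c.1.2), false) else (c.1, true).

Lemma adj_sym c d : adj c d = adj d c.
Proof. by case: c => [u []]; case: d => [v []]. Qed.

Lemma adj_trc t c d : adj (trc t c) (trc t d) = adj c d.
Proof.
case: c => [[x y] []]; case: d => [[x' y'] []]; case: t => [t1 t2];
rewrite /adj /up_down_adj /trc /= ?xpair_eqE //; apply/idP/idP; lia.
Qed.

Lemma adj_tau c d : adj (tau c) (tau d) = adj c d.
Proof.
case: c => [[x y] []]; case: d => [[x' y'] []];
rewrite /adj /up_down_adj /tau /= ?xpair_eqE //; apply/idP/idP; lia.
Qed.

Lemma tauK : involutive tau.
Proof.
case => [[x y] []]; rewrite /tau /=; congr (_, _, _); lia.
Qed.

Lemma tau_inj : injective tau. Proof. exact: inv_inj tauK. Qed.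

Lemma trc_inj t : injective (trc t).
Proof.
case: t => t1 t2 [[x y] b] [[x' y'] b'] /= [] ? ? ->; congr (_, _, _); lia.
Qed.

Lemma trc_comp s t c : trc s (trc t c) = trc (t.1 + s.1, t.2 + s.2) c.
Proof. by case: c => [[x y] b]; rewrite /trc /= !addrA. Qed.

Lemma trc0 c : trc (0, 0) c = c.
Proof. by case: c => [[x y] b]; rewrite /trc /= !addr0. Qed.

Lemma col_trc t c : col (trc t c) = col c + (2 * t.1 + t.2).
Proof. case: c => [[x y] b]; case: t => t1 t2; rewrite /col /trc /=; lia. Qed.

Lemma col_tau c : col (tau c) = col c.
Proof. case: c => [[x y] []]; rewrite /col /tau /=; lia. Qed.

Lemma tau_trc t c : tau (trc t c) = trc (t.1 + t.2, - t.2) (tau c).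
Proof. case: c => [[x y] []]; case: t => t1 t2; rewrite /tau /trc /=; congr (_, _, _); lia. Qed.

Lemma tau2 c : (tau c).2 = ~~ c.2.
Proof. by case: c => [u []]. Qed.

Lemma adj_nxt c : adj c (nxt c).
Proof. case: c => [[x y] []]; rewrite /adj /up_down_adj /nxt /= ?xpair_eqE; lia. Qed.

Lemma col_nxt c : col (nxt c) = col c + 1.
Proof. case: c => [[x y] []]; rewrite /col /nxt /=; lia. Qed.

Lemma nxt2 c : (nxt c).2 = ~~ c.2.
Proof. by case: c => [u []]. Qed.

Lemma adj_bound c d : adj c d ->
  (`|d.1.1 - c.1.1| <= 1) && (`|d.1.2 - c.1.2| <= 1).
Proof.
case: c => [[x y] []]; case: d => [[x' y'] []];
rewrite /adj /up_down_adj /= ?xpair_eqE //; lia.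
Qed.

Lemma path_map (f : cell -> cell) (Hf : forall c d, adj (f c) (f d) = adj c d) x s :
  path adj (f x) (map f s) = path adj x s.
Proof. by elim: s x => //= y s IH x; rewrite Hf IH. Qed.

Lemma ec_map (f : cell -> cell) P :
  (forall c d, adj (f c) (f d) = adj c d) ->
  edge_connected P -> edge_connected [fset f c | c in P].
Proof.
move=> Hf HP c d /imfsetP[c0 /= Hc0 ->] /imfsetP[d0 /= Hd0 ->].
have [s [Hs Hl Ha]] := HP c0 d0 Hc0 Hd0.
exists (map f s); split.
- by rewrite path_map.
- by rewrite last_map Hl.
- rewrite all_map; apply/allP => e He /=; apply: in_imfset.
  by move/allP: Ha => /(_ e He).
Qed.

Lemma card_map (f : cell -> cell) P : injective f -> #|` [fset f c | c in P]| = #|` P|.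
Proof. by move=> fi; rewrite card_imfset. Qed.

Lemma poly_map (f : cell -> cell) n P :
  injective f -> (forall c d, adj (f c) (f d) = adj c d) ->
  polyiamond n P -> polyiamond n [fset f c | c in P].
Proof. by move=> fi Hf [Hc He]; split; [rewrite card_map | apply: ec_map]. Qed.

Lemma poly_translate t n P : polyiamond n P -> polyiamond n (translate t P).
Proof. by rewrite translateE; apply: poly_map; [apply: trc_inj | apply: adj_trc]. Qed.

Lemma poly_refl n P : polyiamond n P -> polyiamond n (refl P).
Proof. by apply: poly_map; [apply: tau_inj | apply: adj_tau]. Qed.

Lemma translate_comp s t P :
  translate s (translate t P) = translate (t.1 + s.1, t.2 + s.2) P.
Proof.
rewrite !translateE -imfset_comp; apply: eq_imfset => // c /=.
by rewrite trc_comp.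
Qed.

Lemma translate0 P : translate (0, 0) P = P.
Proof.
rewrite translateE -[RHS]imfset_id; apply: eq_imfset => // c /=; exact: trc0.
Qed.

Lemma reflK P : refl (refl P) = P.
Proof.
rewrite /refl -imfset_comp -[RHS]imfset_id; apply: eq_imfset => // c /=; exact: tauK.
Qed.

Lemma refl_translate t P : refl (translate t P) = translate (t.1 + t.2, - t.2) (refl P).
Proof.
rewrite /refl !translateE -!imfset_comp; apply: eq_imfset => // c /=; exact: tau_trc.
Qed.

Lemma tclass_translate t P : tclass (translate t P) = tclass P.
Proof.
rewrite /tclass; apply/seteqP; split => Q /= [s ->].
- by rewrite translate_comp; eexists.
- exists (s.1 - t.1, s.2 - t.2); rewrite translate_comp; congr translate.
  by case: s => s1 s2; case: t => t1 t2 /=; congr (_, _); lia.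
Qed.

Lemma tclass_self P : tclass P P.
Proof. by exists (0, 0); rewrite translate0. Qed.

Lemma tclassE P Q : tclass P = tclass Q <-> exists t, P = translate t Q.
Proof.
split.
- move=> E; have : tclass Q P by rewrite -E; apply: tclass_self.
  by case=> t ->; exists t.
- by case=> t ->; rewrite tclass_translate.
Qed.

Lemma seq_max (f : cell -> int) (s : seq cell) : s != [::] ->
  exists2 a, a \in s & forall c, c \in s -> f c <= f a.
Proof.
elim: s => // x s IH _; case: s IH => [|y s] IH.
  by exists x => [|c]; rewrite ?mem_head // inE => /eqP ->.
have [a Ha Hm] := IH isT.
case: (lerP (f x) (f a)) => Hxa.
- exists a; first by rewrite inE Ha orbT.
  by move=> c; rewrite inE => /orP[/eqP -> //|]; apply: Hm.
- exists x; first by rewrite mem_head.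
  move=> c; rewrite inE => /orP[/eqP -> //|/Hm Hc]; exact: le_trans Hc (ltW Hxa).
Qed.

Lemma fset_max (f : cell -> int) (P : {fset cell}) : P != fset0 ->
  exists2 a, a \in P & forall c, c \in P -> f c <= f a.
Proof.
move=> HP; have : enum_fset P != [::].
  by apply: contraNneq HP => E; apply/eqP/fsetP => c; rewrite inE -[c \in P]/(c \in enum_fset P) E.
by move/(seq_max f).
Qed.

Lemma fset_min (f : cell -> int) (P : {fset cell}) : P != fset0 ->
  exists2 a, a \in P & forall c, c \in P -> f a <= f c.
Proof.
move=> HP; have [a Ha Hm] := fset_max (fun c => - f c) HP.
by exists a => // c /Hm; rewrite lerN2.
Qed.

Lemma sub_all_in (A B : {fset cell}) s : A `<=` B ->
  all (fun e => e \in A) s -> all (fun e => e \in B) s.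
Proof. by move=> /fsubsetP AB; apply: sub_all => e /AB. Qed.

Lemma ec_union A B a n : edge_connected A -> edge_connected B ->
  a \in A -> n \in B -> adj a n -> edge_connected (A `|` B).
Proof.
move=> HA HB aA nB an c d.
have sA : A `<=` A `|` B by apply: fsubsetUl.
have sB : B `<=` A `|` B by apply: fsubsetUr.
rewrite !in_fsetU => /orP[cA|cB] /orP[dA|dB].
- have [s [p l al]] := HA c d cA dA; exists s; split => //; exact: sub_all_in al.
- have [s1 [p1 l1 a1]] := HA c a cA aA.
  have [s2 [p2 l2 a2]] := HB n d nB dB.
  exists (s1 ++ n :: s2); split.
  + by rewrite cat_path p1 /= l1 an.
  + by rewrite last_cat /= l2.
  + rewrite all_cat /= (sub_all_in sA a1) (sub_all_in sB a2) andbT.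
    by rewrite in_fsetU nB orbT.
- have [s1 [p1 l1 a1]] := HB c n cB nB.
  have [s2 [p2 l2 a2]] := HA a d aA dA.
  exists (s1 ++ a :: s2); split.
  + by rewrite cat_path p1 /= l1 adj_sym an.
  + by rewrite last_cat /= l2.
  + rewrite all_cat /= (sub_all_in sB a1) (sub_all_in sA a2) andbT.
    by rewrite in_fsetU aA.
- have [s [p l al]] := HB c d cB dB; exists s; split => //; exact: sub_all_in al.
Qed.

Definition sep (A B : {fset cell}) := forall x y, x \in A -> y \in B -> col x < col y.

Lemma sep_disj A B : sep A B -> A `&` B = fset0.
Proof.
move=> H; apply/fsetP => c; rewrite in_fsetI in_fset0.
by apply/negbTE/negP => /andP[/H cA /cA]; rewrite ltxx.
Qed.

Lemma poly_ne0 n P : polyiamond n P -> (0 < n)%N -> P != fset0.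
Proof. by case=> Hc _ Hn; rewrite -cardfs_gt0 Hc. Qed.

Lemma glue_exists l m A B : polyiamond l A -> polyiamond m B -> (0 < l)%N -> (0 < m)%N ->
  exists (b : bool) (t : int * int),
    sep A (translate t (if b then refl B else B)) /\
    polyiamond (l + m) (A `|` translate t (if b then refl B else B)).
Proof.
move=> pA pB l0 m0.
have [a aA amax] := fset_max col (poly_ne0 pA l0).
have [q qB qmin] := fset_min col (poly_ne0 pB m0).
have [b [q0 [q0B q0o q0min]]] : exists b, exists q0, [/\ q0 \in (if b then refl B else B),
    q0.2 != a.2 & forall c, c \in (if b then refl B else B) -> col q0 <= col c].
  case E: (q.2 == a.2).
  - exists true, (tau q); split.
    + exact: in_imfset.
    + by rewrite tau2 -(eqP E); case: (q.2).
    + move=> c /imfsetP[z /= zB ->]; rewrite !col_tau; exact: qmin.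
  - by exists false, q; split => //; rewrite E.
have pB0 : polyiamond m (if b then refl B else B).
  by case: (b) => //; apply: poly_refl.
set B0 := (if b then refl B else B) in q0B q0min pB0 *.
have := nxt2 a; have := adj_nxt a; have := col_nxt a.
move: (nxt a) => n cn an n2.
have e2 : q0.2 = n.2 by rewrite n2; move: q0o; case: (q0.2); case: (a.2).
pose t := (n.1.1 - q0.1.1, n.1.2 - q0.1.2).
have tq0 : trc t q0 = n.
  rewrite /trc /t /= e2 (addrC q0.1.1) (addrC q0.1.2) !subrK.
  by case: n {cn an n2 e2 t} => [[]].
clearbody t.
have pB' := poly_translate t pB0.
have hsep : sep A (translate t B0).
  move=> x y xA; rewrite translateE => /imfsetP[z zB ->]; rewrite col_trc.
  have h1 := amax x xA; have h2 := q0min z zB.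
  have h3 : col q0 + (2 * t.1 + t.2) = col a + 1 by rewrite -cn -tq0 col_trc.
  move: h3; move: (2 * t.1 + t.2) => k h3; lia.
exists b, t; split => //; split.
- rewrite cardfsU sep_disj // cardfs0 subn0.
  by case: pA => ->; case: pB' => ->.
- apply: (ec_union (a := a) (n := n)) => //.
  + by case: pA.
  + by case: pB'.
  + by rewrite -tq0; apply: in_imfset.
Qed.

Lemma split_sub A1 B1 A2 B2 : A1 `|` B1 = A2 `|` B2 -> sep A1 B1 -> sep A2 B2 ->
  ~~ (A1 `<=` A2) -> A2 `<=` A1.
Proof.
move=> E s1 s2 /fsubsetPn[x xA1 xnA2]; apply/fsubsetP => y yA2.
have xB2 : x \in B2.
  have : x \in A2 `|` B2 by rewrite -E in_fsetU xA1.
  by rewrite in_fsetU (negbTE xnA2).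
have lt := s2 y x yA2 xB2.
have : y \in A1 `|` B1 by rewrite E in_fsetU yA2.
rewrite in_fsetU => /orP[// | yB1].
by have := s1 x y xA1 yB1; rewrite ltNge (ltW lt).
Qed.

Lemma split_unique A1 B1 A2 B2 : #|` A1| = #|` A2| -> A1 `|` B1 = A2 `|` B2 ->
  sep A1 B1 -> sep A2 B2 -> A1 = A2 /\ B1 = B2.
Proof.
move=> C E s1 s2.
have EA : A1 = A2.
  case: (boolP (A1 `<=` A2)) => H.
  - by have := eqEfcard A1 A2; rewrite H C leqnn => /eqP.
  - have H' := split_sub E s1 s2 H.
    by have := eqEfcard A2 A1; rewrite H' C leqnn => /eqP.
split => //; subst A2.
apply/fsetP => y; apply/idP/idP => yB.
- have : y \in A1 `|` B2 by rewrite -E in_fsetU yB orbT.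
  rewrite in_fsetU => /orP[yA | //].
  by have := s1 y y yA yB; rewrite ltxx.
- have : y \in A1 `|` B1 by rewrite E in_fsetU yB orbT.
  rewrite in_fsetU => /orP[yA | //].
  by have := s2 y y yA yB; rewrite ltxx.
Qed.

Lemma sep_translate s A B : sep A B -> sep (translate s A) (translate s B).
Proof.
move=> H x y; rewrite !translateE => /imfsetP[x0 xA ->] /imfsetP[y0 yB ->].
by rewrite !col_trc ltrD2r; apply: H.
Qed.

Lemma card_translate t P : #|` translate t P| = #|` P|.
Proof. by rewrite translateE card_map //; apply: trc_inj. Qed.

Lemma translateU t A B : translate t (A `|` B) = translate t A `|` translate t B.
Proof. by rewrite !translateE imfsetU. Qed.

Lemma glue_inj A1 B1 A2 B2 t1 t2 (b : bool) :
  #|` A1| = #|` A2| ->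
  sep A1 (translate t1 (if b then refl B1 else B1)) ->
  sep A2 (translate t2 (if b then refl B2 else B2)) ->
  tclass (A1 `|` translate t1 (if b then refl B1 else B1)) =
  tclass (A2 `|` translate t2 (if b then refl B2 else B2)) ->
  tclass A1 = tclass A2 /\ tclass B1 = tclass B2.
Proof.
move=> C s1 s2 /tclassE[s E].
rewrite translateU translate_comp in E.
have s2' := sep_translate (s := s) s2; rewrite translate_comp in s2'.
have := split_unique _ E s1 s2'.
rewrite card_translate => /(_ C) [EA EB].
split; first by apply/tclassE; exists s.
case: b EB {s1 s2 s2' E} => EB.
- have := congr1 refl EB; rewrite !refl_translate !reflK => EB'.
  by rewrite -(tclass_translate (t1.1 + t1.2, - t1.2) B1) EB' tclass_translate.
- by rewrite -(tclass_translate t1 B1) EB tclass_translate.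
Qed.

Lemma path_bound c s : path adj c s ->
  (`|(last c s).1.1 - c.1.1| <= (size s)%:Z) && (`|(last c s).1.2 - c.1.2| <= (size s)%:Z).
Proof.
elim: s c => [|y s IH] c /=; first by rewrite !subrr normr0.
move=> /andP[Hcy Hp]; have := IH y Hp; have := adj_bound Hcy.
move: (last y s) => e; clear IH Hcy Hp; lia.
Qed.

Lemma num_fact (x y : int) (k N : nat) : (k < N)%N ->
  (`|x| <= k%:Z) && (`|y| <= k%:Z) -> (`|x| <= N%:Z) && (`|y| <= N%:Z).
Proof. lia. Qed.

Lemma conn_bound P c d : edge_connected P -> c \in P -> d \in P ->
  (`|d.1.1 - c.1.1| <= (#|` P|)%:Z) && (`|d.1.2 - c.1.2| <= (#|` P|)%:Z).
Proof.
move=> HP cP dP; have [s [p l a]] := HP c d cP dP.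
rewrite -l; case/shortenP: p => s' p' u' sub'.
have Hs : (size s' < #|` P|)%N.
  have : (size (c :: s') <= size (enum_fset P))%N.
    apply: uniq_leq_size => // e; rewrite inE => /orP[/eqP -> // | /sub' es].
    by move/allP: a => /(_ e es).
  by [].
exact: num_fact Hs (path_bound p').
Qed.

Local Open Scope classical_set_scope.
Definition box (n : nat) : set cell := [set c | (`|c.1.1| <= n%:Z) /\ (`|c.1.2| <= n%:Z)].

Lemma box_fact (x y : int) (n : nat) : `|x| <= n%:Z -> `|y| <= n%:Z ->
  [/\ (absz (x + n%:Z)%R < (2 * n).+1)%N, (absz (y + n%:Z)%R < (2 * n).+1)%N,
      (absz (x + n%:Z))%:Z - n%:Z = x & (absz (y + n%:Z))%:Z - n%:Z = y].
Proof. move=> hx hy; split; lia. Qed.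

Lemma finite_box n : finite_set (box n).
Proof.
pose f (p : nat * nat * bool) : cell := ((p.1.1%:Z - n%:Z, p.1.2%:Z - n%:Z), p.2).
apply: (@sub_finite_set _ _ (f @` ((`I_(2 * n).+1 `*` `I_(2 * n).+1) `*` setT))).
- move=> [[x y] b] /= [hx hy].
  have [h1 h2 h3 h4] := box_fact hx hy.
  exists ((absz (x + n%:Z), absz (y + n%:Z)), b) => //.
  by rewrite /f /= h3 h4.
- apply: finite_image; apply: finite_setX; last exact: finite_finset.
  by apply: finite_setX; apply: finite_II.
Qed.

Definition Sn (n : nat) : set (set {fset cell}) :=
  [set C | exists P, polyiamond n P /\ C = tclass P].

Lemma TE n : T n = #|` fset_set (Sn n)|.
Proof. by []. Qed.

Lemma bound_box (x y : int) (n : nat) : (`|x| <= n%:Z) && (`|y| <= n%:Z) ->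
  (`|x| <= n%:Z) /\ (`|y| <= n%:Z).
Proof. by case/andP. Qed.

Lemma finite_Sn n : finite_set (Sn n).
Proof.
pose FB := fset_set (box n).
apply: (@sub_finite_set _ _ (tclass @` [set` fpowerset FB])); last first.
  by apply: finite_image; apply: finite_fset.
move=> C [P [pP ->]].
case: (fset_0Vmem P) => [P0 | [c0 c0P]].
- by exists P => //; rewrite /= fpowersetE P0 fsub0set.
- exists (translate (- c0.1.1, - c0.1.2) P); last exact: tclass_translate.
  rewrite /= fpowersetE; apply/fsubsetP => e; rewrite translateE => /imfsetP[d dP ->].
  rewrite in_fset_set; last exact: finite_box.
  rewrite in_setE /box /=.
  case: pP => Pc Pe.
  have := conn_bound Pe c0P dP; rewrite Pc.
  exact: bound_box.
Qed.

Local Close Scope classical_set_scope.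

Lemma cardM (K1 K2 : choiceType) (A : {fset K1}) (B : {fset K2}) :
  #|` A `*` B| = (#|` A| * #|` B|)%N.
Proof.
have E : perm_eq (enum_fset (A `*` B)) [seq (x, y) | x <- enum_fset A, y <- enum_fset B].
  apply: uniq_perm.
  - exact: fset_uniq.
  - apply: allpairs_uniq; [exact: fset_uniq | exact: fset_uniq |].
    by move=> [? ?] [? ?] _ _.
  - move=> [x y]; rewrite -[_ \in enum_fset _]/(_ \in A `*` B) in_fsetM /=.
    apply/idP/allpairsP => [/andP[xA yB] | [[x' y'] [/= xA yB [-> ->]]]].
    + by exists (x, y).
    + by apply/andP.
by rewrite (perm_size E) size_allpairs.
Qed.

Definition Rel (l m : nat) (p : set {fset cell} * set {fset cell}) (y : set {fset cell} * bool) : Prop :=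
  exists A B t, [/\ polyiamond l A, polyiamond m B, p.1 = tclass A & p.2 = tclass B] /\
    [/\ sep A (translate t (if y.2 then refl B else B)),
    polyiamond (l + m) (A `|` translate t (if y.2 then refl B else B)) &
    y.1 = tclass (A `|` translate t (if y.2 then refl B else B))].

Definition hfun (l m : nat) p : set {fset cell} * bool :=
  match pselect (exists y, Rel l m p y) with
  | left H => projT1 (cid H)
  | right _ => (set0, false)
  end.

Lemma hfunP l m p : (exists y, Rel l m p y) -> Rel l m p (hfun l m p).
Proof.
move=> H; rewrite /hfun; case: pselect => [H'|//].
by case: (cid H') => y.
Qed.

Lemma Rel_total l m (l0 : (0 < l)%N) (m0 : (0 < m)%N) p :
  p \in fset_set (Sn l) `*` fset_set (Sn m) -> exists y, Rel l m p y.
Proof.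
rewrite in_fsetM => /andP[].
rewrite !in_fset_set ?inE; try exact: finite_Sn.
move=> [A [pA EA]] [B [pB EB]].
have [b [t [hs hp]]] := glue_exists pA pB l0 m0.
by exists (tclass (A `|` translate t (if b then refl B else B)), b), A, B, t; split; split.
Qed.

Lemma Rel_inj l m p1 p2 y : Rel l m p1 y -> Rel l m p2 y -> p1 = p2.
Proof.
case: y => C b.
move=> [A1 [B1 [t1 [[pA1 pB1 E11 E12] [s1 _ EC1]]]]] [A2 [B2 [t2 [[pA2 pB2 E21 E22] [s2 _ EC2]]]]].
rewrite /= in s1 s2 EC1 EC2.
have C12 : #|` A1| = #|` A2| by case: pA1 => ->; case: pA2 => ->.
have [HA HB] := glue_inj C12 s1 s2 (etrans (esym EC1) EC2).
by case: p1 p2 E11 E12 E21 E22 => [x1 y1] [x2 y2] /= -> -> -> ->; rewrite HA HB.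
Qed.

Lemma count_main l m (l0 : (0 < l)%N) (m0 : (0 < m)%N) : (#|` fset_set (Sn l)| * #|` fset_set (Sn m)| <=
                    2 * #|` fset_set (Sn (l + m))|)%N.
Proof.
set PP := fset_set (Sn l) `*` fset_set (Sn m).
have inj : {in PP &, injective (hfun l m)}.
  move=> p1 p2 H1 H2 E.
  apply: (Rel_inj (l := l) (m := m) (y := hfun l m p1)); first exact: hfunP (Rel_total l0 m0 H1).
  by rewrite E; apply: hfunP (Rel_total l0 m0 H2).
have sub : [fset hfun l m p | p in PP] `<=` fset_set (Sn (l + m)) `*` [fset true; false].
  apply/fsubsetP => y /imfsetP[p pP ->].
  have [A [B [t [_ [_ hp EC]]]]] := hfunP (Rel_total l0 m0 pP).
  rewrite in_fsetM; apply/andP; split.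
  - rewrite in_fset_set; last exact: finite_Sn.
    by rewrite inE; exists (A `|` translate t (if (hfun l m p).2 then refl B else B)).
  - by case: (hfun l m p).2; rewrite !inE.
have := fsubset_leq_card sub.
rewrite card_in_imfset // cardM cardfs2 /= -cardM.
by rewrite mulnC.
Qed.


Theorem proposition2 (l m : nat) : (0 < l)%N -> (0 < m)%N ->
  (T l * T m <= 3 * T (l + m))%N.
Proof.
move=> l0 m0; rewrite !TE.
apply: leq_trans (count_main l0 m0) _.
by rewrite leq_mul2r leqnSn orbT.
Qed.
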